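(* Let $a,b,c\in\mathbb C$ with $c=a-b+1$. If $a$ is a negative integer, assume $c\notin\{a,a+1,\dots,0,1\}$; otherwise assume $2-c\notin\{1,2,3,\dots\}$. Set \[ f(z)=F(a,b+1;c+1;z),\quad g(z)=F(a,b-1;c-1;z),\quad h(z)=F(a,b;c;z). \] Then \[ z\big(f(z)g'(z)-f'(z)g(z)\big)=c\big(f(z)g(z)-h(z)^2\big) \] for all $z\in\mathbb C$ when $a$ is a negative integer, and for all $z\in\mathbb D$ otherwise.
   Context: The hypergeometric function is $F(a,b;c;z)=\sum_{k\ge0}\frac{(a)_k(b)_k}{(c)_k}\frac{z^k}{k!}$, where $(x)_0=1$ and $(x)_k=x(x+1)\cdots(x+k-1)$. It is defined for $|z|<1$ when $1-c\notin\{1,2,\dots\}$; when $a=-n$ with $n\in\mathbb N$ the series terminates at $k=n$ and defines a polynomial for all $z\in\mathbb C$ whenever $c\notin\{0,-1,\dots,1-n\}$. $\mathbb D=\{|z|<1\}$. *)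

(* Defs.v *)
From Stdlib Require Import Reals Factorial.
From Coquelicot Require Import Coquelicot.

Fixpoint poch (x : C) (k : nat) : C :=
  match k with
  | O => 1%C
  | S k' => (poch x k' * (x + RtoC (INR k')))%C
  end.

Definition hyp_term (a b c z : C) (k : nat) : C :=
  (poch a k * poch b k / poch c k * z ^ k / RtoC (INR (fact k)))%C.

(* F(a,b;c;z) = sum_{k>=0} hyp_term; the complex series is summed
   componentwise (real and imaginary parts), which equals the complex
   sum wherever the series converges. *)
Definition hypF (a b c z : C) : C :=
  (Series (fun k => Re (hyp_term a b c z k)),
   Series (fun k => Im (hyp_term a b c z k))).

(* Main.v *)
Require Import Defs.
From Stdlib Require Import Reals Classical Factorial Lra Lia Arith ZArith.
From Coquelicot Require Import Coquelicot.

Open Scope C_scope.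
Set Bullet Behavior "Strict Subproofs".


Definition coef (a b c : C) (k : nat) : C :=
  poch a k * poch b k / poch c k / RtoC (INR (fact k)).
Definition Dc (u : nat -> C) (k : nat) : C := RtoC (INR (S k)) * u (S k).
Definition th (u : nat -> C) (k : nat) : C := RtoC (INR k) * u k.
Definition sh (u : nat -> C) (k : nat) : C :=
  match k with O => 0 | S j => u j end.

Lemma RtoC_SINR k : RtoC (INR (S k)) = RtoC (INR k) + 1.
Proof. rewrite S_INR, RtoC_plus. reflexivity. Qed.

Lemma RtoC_fact_S k : RtoC (INR (fact (S k))) = (RtoC (INR k) + 1) * RtoC (INR (fact k)).
Proof.
  change (fact (S k)) with (S k * fact k)%nat.
  rewrite mult_INR, RtoC_mult, RtoC_SINR. reflexivity.
Qed.

Lemma RtoC_neq0 (x : R) : x <> 0%R -> RtoC x <> 0.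
Proof. intros H E. apply H. apply (f_equal fst) in E. simpl in E. exact E. Qed.

Lemma fact_neq0 k : RtoC (INR (fact k)) <> 0.
Proof. apply RtoC_neq0, INR_fact_neq_0. Qed.

Lemma nk1_neq0 k : RtoC (INR k) + 1 <> 0.
Proof. rewrite <- RtoC_SINR. apply RtoC_neq0, not_0_INR. discriminate. Qed.

Lemma poch_S x k : poch x (S k) = poch x k * (x + RtoC (INR k)).
Proof. reflexivity. Qed.

Lemma poch_shift x k : poch x (S k) = x * poch (x + 1) k.
Proof.
  induction k.
  - simpl. ring.
  - rewrite poch_S, IHk, poch_S, RtoC_SINR. ring.
Qed.

Lemma Cmult_neq0 (x y : C) : x <> 0 -> y <> 0 -> x * y <> 0.
Proof. apply Cmult_neq_0. Qed.

Lemma Cmult_integral (x y : C) : x * y = 0 -> x = 0 \/ y = 0.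
Proof.
  intros E. destruct (classic (x = 0)); auto. destruct (classic (y = 0)); auto.
  exfalso. apply (Cmult_neq_0 x y); auto.
Qed.

Section Rel.
Variables a b c : C.
Hypothesis Hc0 : c <> 0.
Hypothesis Hc1 : c - 1 <> 0.
Hypothesis Hcm : c + 1 <> 0.
Hypothesis Hgood : forall k, poch a k = 0 \/
  (poch c k <> 0 /\ poch (c + 1) k <> 0 /\ poch (c - 1) k <> 0).

Lemma nz_k k : poch a k <> 0 ->
  poch c k <> 0 /\ poch (c + 1) k <> 0 /\ poch (c - 1) k <> 0 /\
  c + RtoC (INR k) <> 0 /\ c - 1 + RtoC (INR k) <> 0.
Proof.
  intros Ha. destruct (Hgood k) as [H|[H1 [H2 H3]]]; [tauto|].
  repeat split; auto.
  - intro E. apply H2. apply (Cmult_neq0 c) in H2; auto.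
    exfalso. apply H2. rewrite <- poch_shift, poch_S, E. ring.
  - intro E. assert (poch (c-1) (S k) = 0) by (rewrite poch_S, E; ring).
    rewrite poch_shift in H. replace (c - 1 + 1) with c in H by ring.
    apply Cmult_integral in H. tauto.
Qed.

Lemma nz_S k : poch a (S k) <> 0 -> c + 1 + RtoC (INR k) <> 0.
Proof.
  intros Ha. destruct (Hgood (S k)) as [H|[H1 [H2 H3]]]; [tauto|].
  intro E. apply H2. rewrite poch_S, E. ring.
Qed.

Lemma poch_a_S k : poch a (S k) <> 0 -> poch a k <> 0.
Proof. intros H E. apply H. rewrite poch_S, E. ring. Qed.

Lemma pc1 k : poch (c + 1) k = poch c k * (c + RtoC (INR k)) / c.
Proof.
  rewrite <- poch_S, poch_shift. field. auto.
Qed.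

Lemma pcm1 k : c - 1 + RtoC (INR k) <> 0 ->
  poch (c - 1) k = (c - 1) * poch c k / (c - 1 + RtoC (INR k)).
Proof.
  intros H.
  assert (E: poch (c-1) (S k) = (c - 1) * poch c k).
  { rewrite poch_shift. replace (c - 1 + 1) with c by ring. reflexivity. }
  rewrite poch_S in E. rewrite <- E. field. auto.
Qed.


Lemma Hb_shift (x : C) k : x * poch (x + 1) k = poch x k * (x + RtoC (INR k)).
Proof. rewrite <- poch_shift. reflexivity. Qed.

Lemma a_root k : poch a (S k) = 0 -> poch a k <> 0 -> a = - RtoC (INR k).
Proof.
  intros H1 H2. rewrite poch_S in H1. apply Cmult_integral in H1.
  destruct H1 as [H1|H1]; [tauto|].
  replace a with (a + RtoC (INR k) - RtoC (INR k)) by ring. rewrite H1. ring.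
Qed.

Lemma relA k : c * Dc (coef a b c) k - c * th (coef a b c) k - b * c * coef a b c k
  + b * (c - a) * coef a (b+1) (c+1) k = 0.
Proof.
  unfold Dc, th, coef.
  replace (b * (c - a) * (poch a k * poch (b + 1) k / poch (c + 1) k / RtoC (INR (fact k))))
    with ((c - a) * poch a k * (b * poch (b + 1) k) / poch (c + 1) k / RtoC (INR (fact k)))
    by (unfold Cdiv; ring).
  rewrite Hb_shift, pc1.
  destruct (classic (poch a (S k) = 0)) as [HA|HA].
  - rewrite HA. destruct (classic (poch a k = 0)) as [HA0|HA0].
    + rewrite HA0. unfold Cdiv; ring.
    + pose proof (a_root k HA HA0) as Ea.
      destruct (nz_k k HA0) as (N1 & N2 & N3 & N4 & N5).
      rewrite Ea. rewrite (poch_S c). field. repeat split; auto using fact_neq0.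
  - pose proof (poch_a_S k HA) as HA0.
    destruct (nz_k k HA0) as (N1 & N2 & N3 & N4 & N5).
    rewrite !poch_S, RtoC_fact_S, RtoC_SINR.
    field. repeat split; auto using fact_neq0, nk1_neq0.
Qed.

Lemma pochm1_S (x : C) k : poch (x - 1) (S k) = (x - 1) * poch x k.
Proof. rewrite poch_shift. replace (x - 1 + 1) with x by ring. reflexivity. Qed.

Lemma coef0 (x y z : C) : coef x y z 0 = 1.
Proof. unfold coef. simpl. field. Qed.

Lemma relB k : (c - 1) * coef a (b-1) (c-1) k - (c - 1) * coef a b c k
  - th (coef a b c) k + sh (th (coef a b c)) k + a * sh (coef a b c) k = 0.
Proof.
  destruct k as [|k].
  - simpl sh. unfold th. rewrite !coef0. simpl. ring.
  - unfold sh, th, coef.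
    rewrite (pochm1_S b), (pochm1_S c), (poch_S b), (poch_S c), RtoC_fact_S, RtoC_SINR.
    destruct (classic (poch a (S k) = 0)) as [HA|HA].
    + rewrite HA. destruct (classic (poch a k = 0)) as [HA0|HA0].
      * rewrite HA0. unfold Cdiv; ring.
      * pose proof (a_root k HA HA0) as Ea.
        destruct (nz_k k HA0) as (N1 & N2 & N3 & N4 & N5).
        rewrite Ea. field. repeat split; auto using fact_neq0, nk1_neq0.
    + pose proof (poch_a_S k HA) as HA0.
      destruct (nz_k k HA0) as (N1 & N2 & N3 & N4 & N5).
      rewrite !poch_S.
      field. repeat split; auto using fact_neq0, nk1_neq0.
Qed.

Lemma relC k : th (coef a (b+1) (c+1)) k - sh (th (coef a (b+1) (c+1))) k
  + c * coef a (b+1) (c+1) k - a * sh (coef a (b+1) (c+1)) k - c * coef a b c k = 0.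
Proof.
  destruct k as [|k].
  - simpl sh. unfold th. rewrite !coef0. simpl. ring.
  - unfold sh, th, coef.
    rewrite (poch_S (b+1)), (poch_S (c+1)), (poch_shift b), (poch_S c), RtoC_fact_S, RtoC_SINR.
    rewrite !pc1.
    destruct (classic (poch a (S k) = 0)) as [HA|HA].
    + rewrite HA. destruct (classic (poch a k = 0)) as [HA0|HA0].
      * rewrite HA0. unfold Cdiv; ring.
      * pose proof (a_root k HA HA0) as Ea.
        destruct (nz_k k HA0) as (N1 & N2 & N3 & N4 & N5).
        rewrite Ea. unfold Cdiv; rewrite ?Cmult_0_l, ?Cmult_0_r. field. repeat split; auto using fact_neq0, nk1_neq0.
    + pose proof (poch_a_S k HA) as HA0.
      destruct (nz_k k HA0) as (N1 & N2 & N3 & N4 & N5).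
      pose proof (nz_S k HA) as N6.
      rewrite !poch_S.
      field. repeat split; auto using fact_neq0, nk1_neq0.
Qed.

Lemma relR1 k : b * th (coef a (b+1) (c+1)) k + b * c * coef a (b+1) (c+1) k
  - c * b * coef a b c k - c * th (coef a b c) k = 0.
Proof.
  unfold th, coef.
  replace (b * (RtoC (INR k) * (poch a k * poch (b + 1) k / poch (c + 1) k / RtoC (INR (fact k))))
    + b * c * (poch a k * poch (b + 1) k / poch (c + 1) k / RtoC (INR (fact k))))
    with ((RtoC (INR k) + c) * poch a k * (b * poch (b + 1) k) / poch (c + 1) k / RtoC (INR (fact k)))
    by (unfold Cdiv; ring).
  rewrite Hb_shift, pc1.
  destruct (classic (poch a k = 0)) as [HA0|HA0].
  - rewrite HA0. unfold Cdiv; ring.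
  - destruct (nz_k k HA0) as (N1 & N2 & N3 & N4 & N5).
    field. repeat split; auto using fact_neq0, nk1_neq0.
Qed.

Lemma relR2 k : (c - 1) * (b - 1) * coef a (b-1) (c-1) k + (c - 1) * th (coef a (b-1) (c-1)) k
  - (b - 1) * (c - 1) * coef a b c k - (b - 1) * th (coef a b c) k = 0.
Proof.
  unfold th, coef.
  replace ((c - 1) * (b - 1) * (poch a k * poch (b - 1) k / poch (c - 1) k / RtoC (INR (fact k)))
    + (c - 1) * (RtoC (INR k) * (poch a k * poch (b - 1) k / poch (c - 1) k / RtoC (INR (fact k)))))
    with ((c - 1) * poch a k * (poch (b - 1) k * (b - 1 + RtoC (INR k))) / poch (c - 1) k / RtoC (INR (fact k)))
    by (unfold Cdiv; ring).
  rewrite <- poch_S, pochm1_S.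
  destruct (classic (poch a k = 0)) as [HA0|HA0].
  - rewrite HA0. unfold Cdiv; ring.
  - destruct (nz_k k HA0) as (N1 & N2 & N3 & N4 & N5).
    rewrite pcm1 by auto.
    field. repeat split; auto using fact_neq0, nk1_neq0.
Qed.
End Rel.

Lemma final_alg (a b c z f g h fp gp hp : C) :
  c = a - b + 1 -> c - 1 <> 0 -> (b <> 0 \/ 1 - z <> 0) ->
  c * hp - c * (z * hp) - b * c * h + b * (c - a) * f = 0 ->
  (c - 1) * g - (c - 1) * h - z * hp + z * (z * hp) + a * (z * h) = 0 ->
  z * fp - z * (z * fp) + c * f - a * (z * f) - c * h = 0 ->
  b * (z * fp) + b * c * f - c * b * h - c * (z * hp) = 0 ->
  (c - 1) * (b - 1) * g + (c - 1) * (z * gp) - (b - 1) * (c - 1) * h - (b - 1) * (z * hp) = 0 ->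
  z * (f * gp - fp * g) = c * (f * g - h * h).
Proof.
  intros Ec Hc1 Hor HA HB HC HR1 HR2.
  set (T := z * (f * gp - fp * g) - c * (f * g - h * h)).
  assert (I1 : b * (c - 1) * T = b * f * ((c - 1) * (b - 1) * g + (c - 1) * (z * gp) - (b - 1) * (c - 1) * h - (b - 1) * (z * hp))
     - (c - 1) * g * (b * (z * fp) + b * c * f - c * b * h - c * (z * hp))
     - (b * (b - 1) * f + b * c * h + c * z * hp) * ((c - 1) * g - (c - 1) * h - z * hp + z * (z * hp) + a * (z * h))
     - z * (z * hp + a * h) * (c * hp - c * (z * hp) - b * c * h + b * (c - a) * f)).
  { unfold T. subst c. ring. }
  assert (I2 : (1 - z) * (c - 1) * T = (1 - z) * f * ((c - 1) * (b - 1) * g + (c - 1) * (z * gp) - (b - 1) * (c - 1) * h - (b - 1) * (z * hp))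
     - (c - 1) * g * (z * fp - z * (z * fp) + c * f - a * (z * f) - c * h)
     + (- (1 - z) * (b - 1) * f - c * h + (c - a * z) * f - (1 - z) * c * f) * ((c - 1) * g - (c - 1) * h - z * hp + z * (z * hp) + a * (z * h))
     - z * h * (c * hp - c * (z * hp) - b * c * h + b * (c - a) * f)).
  { unfold T. subst c. ring. }
  rewrite HA, HB, HR1, HR2 in I1. rewrite HA, HB, HC, HR2 in I2.
  assert (T = 0).
  { destruct Hor as [Hb|Hz].
    - assert (E : b * (c - 1) * T = 0) by (rewrite I1; ring).
      apply Cmult_integral in E. destruct E as [E|E]; auto.
      apply Cmult_integral in E. tauto.
    - assert (E : (1 - z) * (c - 1) * T = 0) by (rewrite I2; ring).
      apply Cmult_integral in E. destruct E as [E|E]; auto.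
      apply Cmult_integral in E. tauto. }
  unfold T in H. replace (z * (f * gp - fp * g)) with (z * (f * gp - fp * g) - c * (f * g - h * h) + c * (f * g - h * h)) by ring.
  rewrite H. ring.
Qed.


Definition ser (u : nat -> C) (z l : C) : Prop :=
  @is_series C_AbsRing C_NormedModule (fun k => u k * z ^ k) l.

Definition psum (u : nat -> C) (z : C) : C :=
  (Series (fun k => Re (u k * z ^ k)), Series (fun k => Im (u k * z ^ k))).

Lemma filterlim_Re (l : C) :
  filterlim (fun x : C => Re x) (locally l) (locally (Re l)).
Proof.
  apply filterlim_locally. intros eps. exists eps. intros y Hy.
  destruct Hy as [H1 H2]. exact H1.
Qed.

Lemma filterlim_Im (l : C) :
  filterlim (fun x : C => Im x) (locally l) (locally (Im l)).
Proof.
  apply filterlim_locally. intros eps. exists eps. intros y Hy.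
  destruct Hy as [H1 H2]. exact H2.
Qed.

Lemma sum_n_Re (a : nat -> C) n :
  sum_n (fun k => Re (a k)) n = Re (@sum_n C_AbelianMonoid a n).
Proof.
  induction n.
  - rewrite !sum_O. reflexivity.
  - rewrite !sum_Sn, IHn. reflexivity.
Qed.

Lemma sum_n_Im (a : nat -> C) n :
  sum_n (fun k => Im (a k)) n = Im (@sum_n C_AbelianMonoid a n).
Proof.
  induction n.
  - rewrite !sum_O. reflexivity.
  - rewrite !sum_Sn, IHn. reflexivity.
Qed.

Lemma is_series_Re (a : nat -> C) (l : C) :
  @is_series C_AbsRing C_NormedModule a l -> is_series (fun k => Re (a k)) (Re l).
Proof.
  intros H. unfold is_series in *.
  apply filterlim_ext with (fun n => Re (sum_n a n)).
  - intros n. rewrite sum_n_Re. reflexivity.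
  - eapply filterlim_comp; [exact H|]. apply filterlim_Re.
Qed.

Lemma is_series_Im (a : nat -> C) (l : C) :
  @is_series C_AbsRing C_NormedModule a l -> is_series (fun k => Im (a k)) (Im l).
Proof.
  intros H. unfold is_series in *.
  apply filterlim_ext with (fun n => Im (sum_n a n)).
  - intros n. rewrite sum_n_Im. reflexivity.
  - eapply filterlim_comp; [exact H|]. apply filterlim_Im.
Qed.

Lemma ser_psum u z l : ser u z l -> psum u z = l.
Proof.
  intros H. unfold psum.
  rewrite (is_series_unique _ _ (is_series_Re _ _ H)).
  rewrite (is_series_unique _ _ (is_series_Im _ _ H)).
  destruct l; reflexivity.
Qed.

Lemma ser_unique u z l l' : ser u z l -> ser u z l' -> l = l'.
Proof.
  intros H1 H2. rewrite <- (ser_psum _ _ _ H1). apply ser_psum; auto.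
Qed.

Lemma ser_ext u v z l : (forall k, u k = v k) -> ser u z l -> ser v z l.
Proof.
  intros E H. unfold ser in *. eapply is_series_ext; [|exact H].
  intros n. simpl. rewrite E. reflexivity.
Qed.

Lemma ser_plus u v z lu lv : ser u z lu -> ser v z lv ->
  ser (fun k => u k + v k) z (lu + lv).
Proof.
  intros Hu Hv. unfold ser in *.
  pose proof (is_series_plus _ _ _ _ Hu Hv) as H.
  eapply is_series_ext; [|exact H]. intros n. simpl.
  change (plus (u n * z ^ n) (v n * z ^ n)) with (u n * z ^ n + v n * z ^ n).
  ring.
Qed.

Lemma ser_scal s u z l : ser u z l -> ser (fun k => s * u k) z (s * l).
Proof.
  intros Hu. unfold ser in *.
  pose proof (is_series_scal s _ _ Hu) as H.
  eapply is_series_ext; [|exact H]. intros n. simpl.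
  change (scal s (u n * z ^ n)) with (s * (u n * z ^ n)).
  ring.
Qed.

Lemma ser_zero z : ser (fun _ => 0) z 0.
Proof.
  unfold ser, is_series.
  apply filterlim_ext with (fun _ => (0:C)).
  - intros n. induction n.
    + rewrite sum_O. simpl. ring.
    + rewrite sum_Sn, <- IHn. change ((0:C) = 0 + 0 * z ^ S n). ring.
  - apply filterlim_const.
Qed.

Lemma ser_shift u z l : ser u z l -> ser (sh u) z (z * l).
Proof.
  intros H. unfold ser in *.
  apply is_series_decr_1.
  pose proof (is_series_scal z _ _ H) as H2.
  match goal with |- is_series _ ?L => replace L with (scal z l) end.
  2: { change (z * l = z * l + - (0 * 1)). ring. }
  eapply is_series_ext; [|exact H2].
  intros n. simpl. change (z * (u n * z ^ n) = u n * (z * z ^ n)). ring.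
Qed.

Lemma ser_th u z l : ser (Dc u) z l -> ser (th u) z (z * l).
Proof.
  intros H. apply ser_shift in H. eapply ser_ext; [|exact H].
  intros [|k]; unfold sh, th, Dc; simpl; ring.
Qed.

Lemma ser5 (u1 u2 u3 u4 u5 : nat -> C) (l1 l2 l3 l4 l5 s1 s2 s3 s4 s5 z : C) :
  ser u1 z l1 -> ser u2 z l2 -> ser u3 z l3 -> ser u4 z l4 -> ser u5 z l5 ->
  (forall k, s1 * u1 k + s2 * u2 k + s3 * u3 k + s4 * u4 k + s5 * u5 k = 0) ->
  s1 * l1 + s2 * l2 + s3 * l3 + s4 * l4 + s5 * l5 = 0.
Proof.
  intros H1 H2 H3 H4 H5 Hk.
  pose proof (ser_plus _ _ _ _ _ (ser_plus _ _ _ _ _ (ser_plus _ _ _ _ _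
    (ser_plus _ _ _ _ _ (ser_scal s1 _ _ _ H1) (ser_scal s2 _ _ _ H2))
    (ser_scal s3 _ _ _ H3)) (ser_scal s4 _ _ _ H4)) (ser_scal s5 _ _ _ H5)) as H.
  eapply ser_unique; [exact H|].
  eapply ser_ext; [|apply ser_zero]. intros k. simpl. rewrite Hk. reflexivity.
Qed.

Lemma ser_pred u z l : ser (Dc u) z l ->
  @is_series C_AbsRing C_NormedModule (fun k => RtoC (INR k) * u k * z ^ pred k) l.
Proof.
  intros H. unfold ser in H. apply is_series_decr_1.
  match goal with |- is_series _ ?L => replace L with l end.
  2: { change (l = l + - (RtoC (INR 0) * u 0%nat * z ^ 0)). simpl. ring. }
  eapply is_series_ext; [|exact H]. intros n. unfold Dc. simpl. ring.
Qed.

Lemma Cmod_sum_n_le (a : nat -> C) (b : nat -> R) n :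
  (forall k, Cmod (a k) <= b k) -> Cmod (@sum_n C_AbelianMonoid a n) <= sum_n b n.
Proof.
  intros Hb. induction n.
  - rewrite !sum_O. apply Hb.
  - rewrite !sum_Sn. eapply Rle_trans; [apply Cmod_triangle|].
    change (plus (sum_n b n) (b (S n))) with (sum_n b n + b (S n))%R.
    apply Rplus_le_compat; auto.
Qed.

Lemma norm_series_le (a : nat -> C) (l : C) (b : nat -> R) (lb : R) :
  @is_series C_AbsRing C_NormedModule a l -> (forall k, Cmod (a k) <= b k) ->
  is_series b lb -> Cmod l <= lb.
Proof.
  intros Ha Hb Hlb.
  assert (L1 : is_lim_seq (fun n => Cmod (@sum_n C_AbelianMonoid a n)) (Cmod l)).
  { unfold is_lim_seq. eapply filterlim_comp; [exact Ha|]. apply (filterlim_norm (K:=C_AbsRing) (V:=C_NormedModule)). }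
  assert (L2 : is_lim_seq (sum_n b) lb) by exact Hlb.
  pose proof (is_lim_seq_le _ _ _ _ (fun n => Cmod_sum_n_le a b n Hb) L1 L2) as H.
  exact H.
Qed.

Lemma e_rec (w z : C) k :
  w ^ S k - z ^ S k - RtoC (INR (S k)) * z ^ pred (S k) * (w - z)
  = w * (w ^ k - z ^ k - RtoC (INR k) * z ^ pred k * (w - z))
    + RtoC (INR k) * z ^ pred k * ((w - z) * (w - z)).
Proof.
  destruct k.
  - simpl. ring.
  - rewrite RtoC_SINR. simpl pred. rewrite !Cpow_S. ring.
Qed.

Lemma e_bound (w z : C) (r : R) k :
  0 <= r -> Cmod w <= r -> Cmod z <= r ->
  (Cmod (w ^ k - z ^ k - RtoC (INR k) * z ^ pred k * (w - z)) * r ^ 2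
    <= INR k ^ 2 * r ^ k * Cmod (w - z) ^ 2)%R.
Proof.
  intros Hr Hw Hz. induction k.
  - simpl. replace (1 - 1 - RtoC 0 * 1 * (w - z)) with (RtoC 0) by ring.
    rewrite Cmod_0. lra.
  - rewrite e_rec.
    set (E := Cmod (w ^ k - z ^ k - RtoC (INR k) * z ^ pred k * (w - z))) in *.
    set (d := Cmod (w - z)).
    assert (Hd : (0 <= d)%R) by apply Cmod_ge_0.
    assert (HE : (0 <= E)%R) by apply Cmod_ge_0.
    assert (T1 : (Cmod (w * (w ^ k - z ^ k - RtoC (INR k) * z ^ pred k * (w - z))
      + RtoC (INR k) * z ^ pred k * ((w - z) * (w - z)))
      <= Cmod w * E + INR k * Cmod z ^ pred k * (d * d))%R).
    { eapply Rle_trans; [apply Cmod_triangle|].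
      rewrite !Cmod_mult, Cmod_pow, Cmod_R, Rabs_pos_eq by apply pos_INR.
      fold E d. lra. }
    assert (T2 : (INR k * Cmod z ^ pred k * r ^ 2 <= INR k * r ^ S k)%R).
    { destruct k.
      - simpl. lra.
      - simpl pred. rewrite <- (Rmult_1_r (INR (S k) * r ^ S (S k))).
        replace (INR (S k) * r ^ S (S k) * 1)%R with (INR (S k) * (r ^ k * r ^ 2))%R
          by (simpl; ring).
        rewrite Rmult_assoc. apply Rmult_le_compat_l; [apply pos_INR|].
        apply Rmult_le_compat_r; [apply pow_le; auto|].
        apply pow_incr. split; auto. apply Cmod_ge_0. }
    assert (T3 : (Cmod w * E * r ^ 2 <= r * (INR k ^ 2 * r ^ k * d ^ 2))%R).
    { rewrite Rmult_assoc. apply Rmult_le_compat; auto.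
      - apply Cmod_ge_0.
      - apply Rmult_le_pos; auto. apply pow_le; auto. }
    rewrite S_INR.
    apply Rle_trans with ((Cmod w * E + INR k * Cmod z ^ pred k * (d * d)) * r ^ 2)%R.
    { apply Rmult_le_compat_r; auto. apply pow_le; auto. }
    assert (Hk : (0 <= INR k)%R) by apply pos_INR.
    assert (Hrk : (0 <= r ^ k)%R) by (apply pow_le; auto).
    assert (T4 : (INR k * Cmod z ^ pred k * (d * d) * r ^ 2 <= INR k * r ^ S k * (d * d))%R).
    { replace (INR k * Cmod z ^ pred k * (d * d) * r ^ 2)%R with
        (INR k * Cmod z ^ pred k * r ^ 2 * (d * d))%R by ring.
      apply Rmult_le_compat_r; auto. apply Rmult_le_pos; auto. }
    apply Rle_trans with (r * (INR k ^ 2 * r ^ k * d ^ 2) + INR k * r ^ S k * (d * d))%R.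
    { rewrite Rmult_plus_distr_r. lra. }
    assert (P : (0 <= r * r ^ k * (d * d))%R).
    { apply Rmult_le_pos; [apply Rmult_le_pos; auto|apply Rmult_le_pos; auto]. }
    simpl pow. replace (INR k + 1)%R with (INR k + 1)%R by reflexivity.
    nra.
Qed.

Lemma derive_of_bound (F : C -> C) (z L : C) (M delta : R) :
  (0 < delta)%R -> (0 <= M)%R ->
  (forall w, Cmod (w - z) < delta -> Cmod (F w - F z - (w - z) * L) <= M * Cmod (w - z) ^ 2) ->
  @is_derive C_AbsRing C_NormedModule F z L.
Proof.
  intros Hd HM HB. unfold is_derive, filterdiff. split.
  - apply is_linear_scal_l.
  - intros x Hx. assert (Ex : z = x) by (apply (is_filter_lim_locally_unique (K:=C_AbsRing) (V:=AbsRing_NormedModule C_AbsRing)); exact Hx). subst x.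
    intros eps.
    assert (Hp : (0 < Rmin delta (eps / (M + 1)))%R).
    { apply Rmin_pos; auto. apply Rdiv_lt_0_compat; [apply cond_pos|lra]. }
    exists (mkposreal _ Hp). intros w Hw.
    change (Cmod (w - z) < Rmin delta (eps / (M + 1)))%R in Hw.
    change (Cmod (F w - F z - (w - z) * L) <= eps * Cmod (w - z))%R.
    assert (H1 : Cmod (w - z) < delta) by (eapply Rlt_le_trans; [exact Hw|apply Rmin_l]).
    assert (H2 : (Cmod (w - z) < eps / (M + 1))%R) by (eapply Rlt_le_trans; [exact Hw|apply Rmin_r]).
    eapply Rle_trans; [apply HB; auto|].
    assert (Hc : (0 <= Cmod (w - z))%R) by apply Cmod_ge_0.
    assert (H3 : (M * Cmod (w - z) <= eps)%R).
    { apply Rle_trans with ((M + 1) * Cmod (w - z))%R; [nra|].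
      apply Rmult_lt_compat_l with (r := (M + 1)%R) in H2; [|lra].
      replace ((M + 1) * (eps / (M + 1)))%R with (pos eps) in H2 by (field; lra). lra. }
    simpl. nra.
Qed.

Definition sumb (u : nat -> C) (r : R) : Prop :=
  ex_series (fun k => INR (S k) ^ 2 * Cmod (u k) * r ^ k)%R.

Lemma ser_abs u w r : (0 <= r)%R -> Cmod w <= r -> sumb u r -> ser u w (psum u w).
Proof.
  intros Hr Hw Hs.
  assert (E : ex_series (K:=C_AbsRing) (V:=C_CompleteNormedModule) (fun k => u k * w ^ k)).
  { eapply ex_series_le; [|exact Hs]. intros n.
    change (norm (u n * w ^ n)) with (Cmod (u n * w ^ n)).
    rewrite Cmod_mult, Cmod_pow.
    assert (0 <= Cmod (u n))%R by apply Cmod_ge_0.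
    assert (Cmod w ^ n <= r ^ n)%R by (apply pow_incr; split; auto; apply Cmod_ge_0).
    assert (1 <= INR (S n) ^ 2)%R.
    { rewrite S_INR. pose proof (pos_INR n). nra. }
    assert (0 <= Cmod w ^ n)%R by (apply pow_le, Cmod_ge_0).
    assert (0 <= r ^ n)%R by (apply pow_le; lra).
    apply Rle_trans with (Cmod (u n) * r ^ n)%R.
    - apply Rmult_le_compat_l; auto.
    - assert (0 <= Cmod (u n) * r ^ n)%R by (apply Rmult_le_pos; auto).
      nra. }
  destruct E as [l Hl].
  assert (Hs' : ser u w l) by exact Hl.
  rewrite (ser_psum _ _ _ Hs'). exact Hs'.
Qed.

Lemma ser_D_abs u z r : Cmod z < r -> sumb u r -> ser (Dc u) z (psum (Dc u) z).
Proof.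
  intros Hz Hs.
  assert (Hr : (0 < r)%R) by (eapply Rle_lt_trans; [apply Cmod_ge_0|exact Hz]).
  assert (E : ex_series (K:=C_AbsRing) (V:=C_CompleteNormedModule) (fun k => Dc u k * z ^ k)).
  { apply (ex_series_le _ (fun k => / r * (INR (S (S k)) ^ 2 * Cmod (u (S k)) * r ^ (S k)))%R).
    - intros n. change (norm (Dc u n * z ^ n)) with (Cmod (Dc u n * z ^ n)).
      unfold Dc. rewrite !Cmod_mult, Cmod_pow, Cmod_R, Rabs_pos_eq by apply pos_INR.
      assert (0 <= Cmod (u (S n)))%R by apply Cmod_ge_0.
      assert (Cmod z ^ n <= r ^ n)%R by (apply pow_incr; split; [apply Cmod_ge_0|lra]).
      assert (0 <= Cmod z ^ n)%R by (apply pow_le, Cmod_ge_0).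
      assert (INR (S n) <= INR (S (S n)) ^ 2)%R.
      { rewrite !S_INR. pose proof (pos_INR n). nra. }
      assert (0 <= INR (S n))%R by apply pos_INR.
      replace (/ r * (INR (S (S n)) ^ 2 * Cmod (u (S n)) * r ^ S n))%R
        with (INR (S (S n)) ^ 2 * Cmod (u (S n)) * r ^ n)%R by (simpl; field; lra).
      assert (0 <= r ^ n)%R by (apply pow_le; lra).
      apply Rle_trans with (INR (S n) * Cmod (u (S n)) * r ^ n)%R.
      + apply Rmult_le_compat_l; auto. apply Rmult_le_pos; auto.
      + apply Rmult_le_compat_r; auto. apply Rmult_le_compat_r; auto.
    - apply (ex_series_scal (V:=R_NormedModule) (/ r)%R).
      apply (ex_series_incr_1 (fun k => INR (S k) ^ 2 * Cmod (u k) * r ^ k)%R). exact Hs. }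
  destruct E as [l Hl].
  assert (Hs' : ser (Dc u) z l) by exact Hl.
  rewrite (ser_psum _ _ _ Hs'). exact Hs'.
Qed.

Lemma psum_derive u z r : Cmod z < r -> sumb u r ->
  @is_derive C_AbsRing C_NormedModule (psum u) z (psum (Dc u) z).
Proof.
  intros Hz Hs.
  assert (Hr : (0 < r)%R) by (eapply Rle_lt_trans; [apply Cmod_ge_0|exact Hz]).
  set (L := psum (Dc u) z).
  assert (HL : ser (Dc u) z L) by (apply ser_D_abs with r; auto).
  pose proof (ser_pred _ _ _ HL) as HP.
  set (K := Series (fun k => INR (S k) ^ 2 * Cmod (u k) * r ^ k)%R).
  apply derive_of_bound with (delta := (r - Cmod z)%R) (M := Rmax 0 (K / r ^ 2)).
  { lra. } { apply Rmax_l. }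
  intros w Hw.
  assert (Hwr : Cmod w <= r).
  { replace w with (z + (w - z)) by ring.
    eapply Rle_trans; [apply Cmod_triangle|]. lra. }
  pose proof (ser_abs u w r (Rlt_le _ _ Hr) Hwr Hs) as Hsw.
  pose proof (ser_abs u z r (Rlt_le _ _ Hr) (Rlt_le _ _ Hz) Hs) as Hsz.
  unfold ser in Hsw, Hsz.
  pose proof (is_series_minus _ _ _ _ (is_series_minus _ _ _ _ Hsw Hsz)
     (is_series_scal (w - z) _ _ HP)) as H.
  set (d := Cmod (w - z)) in *.
  assert (Hd : (0 <= d)%R) by apply Cmod_ge_0.
  assert (Hb : is_series (fun k => INR (S k) ^ 2 * Cmod (u k) * r ^ k * (d ^ 2 / r ^ 2))%R
     (K * (d ^ 2 / r ^ 2))%R).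
  { apply is_series_scal_r. apply Series_correct. exact Hs. }
  assert (Hle : (Cmod (plus (plus (psum u w) (opp (psum u z))) (opp (scal (w - z)%C L)))
     <= K * (d ^ 2 / r ^ 2))%R).
  2: { change (Cmod (psum u w - psum u z - (w - z) * L)%C <= K * (d ^ 2 / r ^ 2))%R in Hle.
       eapply Rle_trans; [exact Hle|].
    assert (0 < r ^ 2)%R by (apply pow_lt; lra).
    replace (K * (d ^ 2 / r ^ 2))%R with ((K / r ^ 2) * d ^ 2)%R by (field; lra).
    apply Rmult_le_compat_r; [apply pow_le; auto|apply Rmax_r]. }
  refine (norm_series_le _ _ _ _ H _ Hb).
  - intros k.
    change (Cmod (u k * w ^ k + - (u k * z ^ k) + - ((w - z) * (RtoC (INR k) * u k * z ^ pred k)))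
      <= INR (S k) ^ 2 * Cmod (u k) * r ^ k * (d ^ 2 / r ^ 2))%R.
    replace (u k * w ^ k + - (u k * z ^ k) + - ((w - z) * (RtoC (INR k) * u k * z ^ pred k)))
      with (u k * (w ^ k - z ^ k - RtoC (INR k) * z ^ pred k * (w - z))) by ring.
    rewrite Cmod_mult.
    pose proof (e_bound w z r k (Rlt_le _ _ Hr) Hwr (Rlt_le _ _ Hz)) as Eb. fold d in Eb.
    set (E := Cmod (w ^ k - z ^ k - RtoC (INR k) * z ^ pred k * (w - z))) in *.
    assert (0 < r ^ 2)%R by (apply pow_lt; lra).
    assert (HE : (E <= INR k ^ 2 * r ^ k * d ^ 2 / r ^ 2)%R).
    { apply Rmult_le_reg_r with (r ^ 2)%R; auto. field_simplify; lra. }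
    assert (0 <= Cmod (u k))%R by apply Cmod_ge_0.
    assert (0 <= r ^ k)%R by (apply pow_le; lra).
    assert (INR k ^ 2 <= INR (S k) ^ 2)%R by (rewrite S_INR; pose proof (pos_INR k); nra).
    apply Rle_trans with (Cmod (u k) * (INR k ^ 2 * r ^ k * d ^ 2 / r ^ 2))%R.
    { apply Rmult_le_compat_l; auto. }
    unfold Rdiv. 
    assert (0 <= d ^ 2 * / r ^ 2)%R.
    { apply Rmult_le_pos; [apply pow_le; auto|]. left. apply Rinv_0_lt_compat. auto. }
    replace (Cmod (u k) * (INR k ^ 2 * r ^ k * d ^ 2 * / r ^ 2))%R
      with (INR k ^ 2 * (Cmod (u k) * r ^ k * (d ^ 2 * / r ^ 2)))%R by ring.
    replace (INR (S k) ^ 2 * Cmod (u k) * r ^ k * (d ^ 2 * / r ^ 2))%R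
      with (INR (S k) ^ 2 * (Cmod (u k) * r ^ k * (d ^ 2 * / r ^ 2)))%R by ring.
    apply Rmult_le_compat_r; auto.
    apply Rmult_le_pos; auto. apply Rmult_le_pos; auto.
Qed.

Lemma ratio_ex (v : nat -> R) (rho : R) N : (0 <= rho < 1)%R -> (forall k, 0 <= v k)%R ->
  (forall k, (N <= k)%nat -> v (S k) <= rho * v k)%R -> ex_series v.
Proof.
  intros Hr Hv Hk.
  apply (ex_series_incr_n v N).
  apply (ex_series_le (K:=R_AbsRing) (V:=R_CompleteNormedModule) _ (fun j => v N * rho ^ j)%R).
  - intros j. change (Rabs (v (N + j)%nat) <= v N * rho ^ j)%R.
    rewrite Rabs_pos_eq by auto.
    induction j.
    + rewrite Nat.add_0_r. simpl. lra.
    + replace (N + S j)%nat with (S (N + j)) by lia.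
      eapply Rle_trans; [apply Hk; lia|].
      simpl. assert (0 <= rho)%R by lra. nra.
  - apply (ex_series_scal (K:=R_AbsRing) (V:=R_NormedModule) (v N)).
    apply ex_series_geom. rewrite Rabs_pos_eq; lra.
Qed.

Lemma sumb_finite (u : nat -> C) (N : nat) (r : R) : (0 <= r)%R -> (forall k, (N <= k)%nat -> u k = 0) -> sumb u r.
Proof.
  intros Hr Hu. apply (ratio_ex _ 0 N); [lra| |].
  - intros k. apply Rmult_le_pos; [apply Rmult_le_pos; [apply pow2_ge_0|apply Cmod_ge_0]|apply pow_le; auto].
  - intros k Hk. rewrite (Hu k) by lia. rewrite (Hu (S k)) by lia. rewrite Cmod_0. lra.
Qed.

Lemma ev_ineq (A r rho : R) : (0 <= A)%R -> (0 <= r)%R -> (r < rho)%R ->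
  exists N : nat, forall k, (N <= k)%nat ->
    (1 <= INR k)%R /\ (A < INR k)%R /\
    (r * ((INR k + 2) ^ 2 * (INR k + A) ^ 2) <= rho * ((INR k + 1) ^ 3 * (INR k - A)))%R.
Proof.
  intros HA Hr Hrho.
  set (B := (A + 2)%R). set (K := (4 * B + 6 * B ^ 2 + 4 * B ^ 3 + B ^ 4)%R).
  set (X0 := (1 + A + (rho * A + r * K) / (rho - r))%R).
  assert (HK : (0 <= K)%R) by (unfold K, B; assert (0 <= A + 2)%R by lra; nra).
  assert (HX : (0 <= (rho * A + r * K) / (rho - r))%R).
  { apply Rdiv_le_0_compat; [|lra]. assert (0 <= rho * A)%R by nra. assert (0 <= r * K)%R by nra. lra. }
  destruct (archimed X0) as [Hup _].
  assert (Hz : (0 <= up X0)%Z).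
  { apply le_IZR. assert (0 <= X0)%R by (unfold X0; lra). lra. }
  exists (Z.to_nat (up X0)). intros k Hk.
  apply le_INR in Hk. rewrite INR_IZR_INZ, Z2Nat.id in Hk by auto.
  set (x := INR k) in *.
  assert (Hx : (X0 <= x)%R) by lra.
  unfold X0 in Hx.
  assert (Hx1 : (1 <= x)%R) by lra.
  assert (HxA : (A < x)%R) by lra.
  split; [lra|split; [lra|]].
  assert (S1 : ((x + 2) ^ 2 * (x + A) ^ 2 <= (x + B) ^ 4)%R).
  { assert (E : ((x + 2) * (x + A) <= (x + B) ^ 2)%R) by (unfold B; nra).
    assert (0 <= (x + 2) * (x + A))%R by nra.
    replace ((x + 2) ^ 2 * (x + A) ^ 2)%R with (((x + 2) * (x + A)) ^ 2)%R by ring.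
    replace ((x + B) ^ 4)%R with (((x + B) ^ 2) ^ 2)%R by ring.
    apply pow_incr. lra. }
  assert (S2 : ((x + B) ^ 4 <= x ^ 4 + K * x ^ 3)%R).
  { assert (HB : (0 <= B)%R) by (unfold B; lra).
    assert (x2 : (x ^ 2 <= x ^ 3)%R) by (simpl; nra).
    assert (x1 : (x <= x ^ 3)%R) by (simpl; nra).
    assert (x0 : (1 <= x ^ 3)%R) by (simpl; nra).
    unfold K.
    replace ((x + B) ^ 4)%R with (x ^ 4 + 4 * B * x ^ 3 + 6 * B ^ 2 * x ^ 2 + 4 * B ^ 3 * x + B ^ 4)%R by ring.
    assert (6 * B ^ 2 * x ^ 2 <= 6 * B ^ 2 * x ^ 3)%R by (apply Rmult_le_compat_l; [nra|auto]).
    assert (4 * B ^ 3 * x <= 4 * B ^ 3 * x ^ 3)%R by (apply Rmult_le_compat_l; [simpl; nra|auto]).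
    assert (B ^ 4 <= B ^ 4 * x ^ 3)%R by (assert (0 <= B ^ 4)%R by (simpl; nra); nra).
    nra. }
  assert (S3 : (x ^ 3 * (x - A) <= (x + 1) ^ 3 * (x - A))%R).
  { apply Rmult_le_compat_r; [lra|]. apply pow_incr. lra. }
  assert (S4 : (r * (x ^ 4 + K * x ^ 3) <= rho * (x ^ 3 * (x - A)))%R).
  { assert (E : (rho * A + r * K <= (rho - r) * x)%R).
    { assert (E1 : ((rho * A + r * K) / (rho - r) <= x)%R) by lra.
      apply Rmult_le_compat_l with (r := (rho - r)%R) in E1; [|lra].
      replace ((rho - r) * ((rho * A + r * K) / (rho - r)))%R with (rho * A + r * K)%R in E1
        by (field; lra). lra. }
    assert (0 <= x ^ 3)%R by (apply pow_le; lra).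
    replace (rho * (x ^ 3 * (x - A)) - r * (x ^ 4 + K * x ^ 3))%R
      with (x ^ 3 * ((rho - r) * x - rho * A - r * K))%R by ring.
    assert (0 <= x ^ 3 * ((rho - r) * x - rho * A - r * K))%R by (apply Rmult_le_pos; lra).
    lra. }
  assert (r * ((x + 2) ^ 2 * (x + A) ^ 2) <= r * (x ^ 4 + K * x ^ 3))%R.
  { apply Rmult_le_compat_l; auto. lra. }
  assert (rho * (x ^ 3 * (x - A)) <= rho * ((x + 1) ^ 3 * (x - A)))%R.
  { apply Rmult_le_compat_l; lra. }
  lra.
Qed.

Lemma coef_S (a b c : C) k : poch c (S k) <> 0 ->
  coef a b c (S k) * ((c + RtoC (INR k)) * (RtoC (INR k) + 1))
  = coef a b c k * ((a + RtoC (INR k)) * (b + RtoC (INR k))).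
Proof.
  intros H. rewrite poch_S in H.
  assert (H1 : poch c k <> 0) by (intro E; apply H; rewrite E; ring).
  assert (H2 : c + RtoC (INR k) <> 0) by (intro E; apply H; rewrite E; ring).
  unfold coef. rewrite !poch_S, RtoC_fact_S.
  field. repeat split; auto using fact_neq0, nk1_neq0.
Qed.

Lemma Cmod_nk k : Cmod (RtoC (INR k)) = INR k.
Proof. rewrite Cmod_R, Rabs_pos_eq; auto using pos_INR. Qed.

Lemma sumb_hyp a b c r : (forall k, poch c k <> 0) -> (0 <= r < 1)%R -> sumb (coef a b c) r.
Proof.
  intros Hc Hr.
  set (A := (Cmod a + Cmod b + Cmod c)%R).
  assert (HA : (0 <= A)%R) by (unfold A; pose proof (Cmod_ge_0 a); pose proof (Cmod_ge_0 b); pose proof (Cmod_ge_0 c); lra).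
  destruct (ev_ineq A r ((1 + r) / 2) HA (proj1 Hr)) as [N HN]; [lra|].
  apply (ratio_ex _ ((1 + r) / 2) N); [lra| |].
  { intros k. apply Rmult_le_pos; [apply Rmult_le_pos; [apply pow2_ge_0|apply Cmod_ge_0]|apply pow_le; lra]. }
  intros k Hk. destruct (HN k Hk) as (H1 & H2 & H3).
  set (x := INR k) in *.
  set (rho := ((1 + r) / 2)%R) in *.
  assert (Hrho : (0 <= rho)%R) by (unfold rho; lra).
  pose proof (coef_S a b c k (Hc (S k))) as E. fold x in E.
  apply (f_equal Cmod) in E. rewrite !Cmod_mult in E.
  replace (RtoC x + 1) with (RtoC (x + 1)) in E by (rewrite RtoC_plus; reflexivity).
  rewrite Cmod_R, (Rabs_pos_eq (x + 1)) in E by lra.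
  set (p := Cmod (coef a b c (S k))) in *.
  set (q := Cmod (coef a b c k)) in *.
  assert (Hp : (0 <= p)%R) by apply Cmod_ge_0.
  assert (Hq : (0 <= q)%R) by apply Cmod_ge_0.
  assert (Ba : (Cmod (a + RtoC x) <= x + A)%R).
  { eapply Rle_trans; [apply Cmod_triangle|]. unfold x. rewrite Cmod_nk. fold x.
    unfold A. pose proof (Cmod_ge_0 b); pose proof (Cmod_ge_0 c); lra. }
  assert (Bb : (Cmod (b + RtoC x) <= x + A)%R).
  { eapply Rle_trans; [apply Cmod_triangle|]. unfold x. rewrite Cmod_nk. fold x.
    unfold A. pose proof (Cmod_ge_0 a); pose proof (Cmod_ge_0 c); lra. }
  assert (Bc : (x - A <= Cmod (c + RtoC x))%R).
  { assert (Ex : (x <= Cmod (c + RtoC x) + Cmod c)%R).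
    { replace x with (Cmod (RtoC x)) at 1 by (unfold x; apply Cmod_nk).
      replace (RtoC x) with ((c + RtoC x) + - c) at 1 by ring.
      eapply Rle_trans; [apply Cmod_triangle|]. rewrite Cmod_opp. lra. }
    unfold A in *. pose proof (Cmod_ge_0 a); pose proof (Cmod_ge_0 b); lra. }
  set (ca := Cmod (a + RtoC x)) in *. set (cb := Cmod (b + RtoC x)) in *.
  set (cc := Cmod (c + RtoC x)) in *.
  assert (Hca : (0 <= ca)%R) by apply Cmod_ge_0.
  assert (Hcb : (0 <= cb)%R) by apply Cmod_ge_0.
  set (m := (cc * (x + 1))%R).
  assert (Hm : (0 < m)%R) by (unfold m; apply Rmult_lt_0_compat; lra).
  assert (Key : ((x + 2) ^ 2 * p * r <= rho * (x + 1) ^ 2 * q)%R).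
  { apply Rmult_le_reg_r with m; auto.
    replace ((x + 2) ^ 2 * p * r * m)%R with ((x + 2) ^ 2 * r * (p * (cc * (x + 1))))%R by (unfold m; ring).
    rewrite E.
    assert (T1 : (ca * cb <= (x + A) ^ 2)%R) by (simpl; nra).
    assert (T2 : ((x + 2) ^ 2 * r * (q * (ca * cb)) <= q * (r * ((x + 2) ^ 2 * (x + A) ^ 2)))%R).
    { replace ((x + 2) ^ 2 * r * (q * (ca * cb)))%R with (q * (r * ((x + 2) ^ 2 * (ca * cb))))%R by ring.
      apply Rmult_le_compat_l; auto. apply Rmult_le_compat_l; [lra|].
      apply Rmult_le_compat_l; auto. apply pow2_ge_0. }
    assert (T3 : (q * (r * ((x + 2) ^ 2 * (x + A) ^ 2)) <= q * (rho * ((x + 1) ^ 3 * (x - A))))%R).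
    { apply Rmult_le_compat_l; auto. }
    assert (T4 : (q * (rho * ((x + 1) ^ 3 * (x - A))) <= rho * (x + 1) ^ 2 * q * m)%R).
    { unfold m. replace (rho * (x + 1) ^ 2 * q * (cc * (x + 1)))%R with (q * (rho * ((x + 1) ^ 3 * cc)))%R by ring.
      apply Rmult_le_compat_l; auto. apply Rmult_le_compat_l; [lra|].
      apply Rmult_le_compat_l; [apply pow_le; lra|auto]. }
    lra. }
  rewrite !S_INR. fold x.
  replace (r ^ S k)%R with (r * r ^ k)%R by reflexivity.
  assert (0 <= r ^ k)%R by (apply pow_le; lra).
  replace ((x + 1 + 1) ^ 2 * p * (r * r ^ k))%R with (((x + 2) ^ 2 * p * r) * r ^ k)%R by ring.
  replace (rho * ((x + 1) ^ 2 * q * r ^ k))%R with ((rho * (x + 1) ^ 2 * q) * r ^ k)%R by ring.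
  apply Rmult_le_compat_r; auto.
Qed.


Lemma pack u z r : Cmod z < r -> sumb u r ->
  ser u z (psum u z) /\ ser (Dc u) z (psum (Dc u) z) /\
  ser (th u) z (z * psum (Dc u) z) /\ ser (sh u) z (z * psum u z) /\
  ser (sh (th u)) z (z * (z * psum (Dc u) z)) /\
  @is_derive C_AbsRing C_NormedModule (psum u) z (psum (Dc u) z).
Proof.
  intros Hz Hs.
  assert (Hr : (0 <= r)%R) by (pose proof (Cmod_ge_0 z); lra).
  pose proof (ser_abs u z r Hr (Rlt_le _ _ Hz) Hs) as H1.
  pose proof (ser_D_abs u z r Hz Hs) as H2.
  pose proof (ser_th _ _ _ H2) as H3.
  split; [auto|split; [auto|split; [auto|split; [apply ser_shift; auto|split;
    [apply ser_shift; auto|apply psum_derive with r; auto]]]]].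
Qed.

Lemma core (a b c z : C) (r : R) :
  c <> 0 -> c - 1 <> 0 -> c + 1 <> 0 ->
  (forall k, poch a k = 0 \/ (poch c k <> 0 /\ poch (c + 1) k <> 0 /\ poch (c - 1) k <> 0)) ->
  c = a - b + 1 -> (b <> 0 \/ 1 - z <> 0) -> Cmod z < r ->
  sumb (coef a b c) r -> sumb (coef a (b+1) (c+1)) r -> sumb (coef a (b-1) (c-1)) r ->
  z * (psum (coef a (b+1) (c+1)) z * psum (Dc (coef a (b-1) (c-1))) z
       - psum (Dc (coef a (b+1) (c+1))) z * psum (coef a (b-1) (c-1)) z)
  = c * (psum (coef a (b+1) (c+1)) z * psum (coef a (b-1) (c-1)) z
         - psum (coef a b c) z * psum (coef a b c) z).
Proof.
  intros Hc0 Hc1 Hcm Hg Ec Hor Hz ST SF SG.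
  set (T := coef a b c). set (F := coef a (b+1) (c+1)). set (G := coef a (b-1) (c-1)).
  destruct (pack T z r Hz ST) as (T0 & T1 & T2 & T3 & T4 & _).
  destruct (pack F z r Hz SF) as (F0 & F1 & F2 & F3 & F4 & _).
  destruct (pack G z r Hz SG) as (G0 & G1 & G2 & G3 & G4 & _).
  apply (final_alg a b c z (psum F z) (psum G z) (psum T z)
           (psum (Dc F) z) (psum (Dc G) z) (psum (Dc T) z)); auto.
  - pose proof (ser5 _ _ _ _ _ _ _ _ _ _ c (- c) (- (b * c)) (b * (c - a)) 0 z T1 T2 T0 F0 T0) as X.
    match type of X with _ -> ?L = _ => transitivity L end; [ring|apply X].
    intros k. match goal with |- ?L = _ => transitivity L end; [reflexivity|].
    pose proof (relA a b c Hc0 Hc1 Hg k) as R. fold T F in R. match type of R with ?L = _ => transitivity L end; [ring|exact R].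
  - pose proof (ser5 _ _ _ _ _ _ _ _ _ _ (c - 1) (- (c - 1)) (-1) 1 a z G0 T0 T2 T4 T3) as X.
    match type of X with _ -> ?L = _ => transitivity L end; [ring|apply X].
    intros k. match goal with |- ?L = _ => transitivity L end; [reflexivity|].
    pose proof (relB a b c Hc0 Hc1 Hg k) as R. fold T G in R. match type of R with ?L = _ => transitivity L end; [ring|exact R].
  - pose proof (ser5 _ _ _ _ _ _ _ _ _ _ 1 (-1) c (- a) (- c) z F2 F4 F0 F3 T0) as X.
    match type of X with _ -> ?L = _ => transitivity L end; [ring|apply X].
    intros k. match goal with |- ?L = _ => transitivity L end; [reflexivity|].
    pose proof (relC a b c Hc0 Hc1 Hg k) as R. fold T F in R. match type of R with ?L = _ => transitivity L end; [ring|exact R].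
  - pose proof (ser5 _ _ _ _ _ _ _ _ _ _ b (b * c) (- (c * b)) (- c) 0 z F2 F0 T0 T2 T0) as X.
    match type of X with _ -> ?L = _ => transitivity L end; [ring|apply X].
    intros k. match goal with |- ?L = _ => transitivity L end; [reflexivity|].
    pose proof (relR1 a b c Hc0 Hc1 Hg k) as R. fold T F in R. match type of R with ?L = _ => transitivity L end; [ring|exact R].
  - pose proof (ser5 _ _ _ _ _ _ _ _ _ _ ((c - 1) * (b - 1)) (c - 1) (- ((b - 1) * (c - 1))) (- (b - 1)) 0 z G0 G2 T0 T2 T0) as X.
    match type of X with _ -> ?L = _ => transitivity L end; [ring|apply X].
    intros k. match goal with |- ?L = _ => transitivity L end; [reflexivity|].
    pose proof (relR2 a b c Hc0 Hc1 Hg k) as R. fold T G in R. match type of R with ?L = _ => transitivity L end; [ring|exact R].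
Qed.

Ltac ceq := apply injective_projections; unfold Cminus, Cplus, Copp, Cmult, RtoC; simpl; ring.

Lemma hypF_psum a b c w : hypF a b c w = psum (coef a b c) w.
Proof.
  unfold hypF, psum. f_equal; apply Series_ext; intros k; f_equal;
  unfold hyp_term, coef, Cdiv; ring.
Qed.

Lemma poch_zero x m j : (j < m)%nat -> x + RtoC (INR j) = 0 -> poch x m = 0.
Proof.
  induction m; intros Hj E; [lia|].
  rewrite poch_S. destruct (Nat.eq_dec j m) as [->|Hne].
  - rewrite E. ring.
  - rewrite IHm by (auto; lia). ring.
Qed.

Lemma poch_nz x m : (forall j, (j < m)%nat -> x + RtoC (INR j) <> 0) -> poch x m <> 0.
Proof.
  induction m; intros H.
  - simpl. intro E. apply (f_equal fst) in E. simpl in E. lra.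
  - rewrite poch_S. apply Cmult_neq0; auto.
Qed.

Lemma solve_c (c : C) (s : R) : c + RtoC s = 0 -> c = RtoC (- s).
Proof.
  intros E. replace c with (c + RtoC s - RtoC s) by ring. rewrite E. ceq.
Qed.

Lemma coef_zero_tail a b c n k : a = RtoC (- INR (S n)) -> (S (S n) <= k)%nat -> coef a b c k = 0.
Proof.
  intros Ha Hk. unfold coef. rewrite (poch_zero a k (S n)); [unfold Cdiv; ring|lia|].
  rewrite Ha. ceq.
Qed.

Lemma lemma5_aux (a b c : C) :
  c = (a - b + 1)%C ->
  let f := fun z => hypF a (b + 1) (c + 1) z in
  let g := fun z => hypF a (b - 1) (c - 1) z in
  let h := fun z => hypF a b c z in
  let P := fun z : C =>
    exists f' g' : C, is_derive f z f' /\ is_derive g z g' /\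
      (z * (f z * g' - f' * g z) = c * (f z * g z - h z * h z))%C in
  (forall n : nat, a = RtoC (- INR (S n)) ->
     (forall k : nat, (k <= S (S n))%nat -> c <> (a + RtoC (INR k))%C) ->
     forall z : C, P z) /\
  ((~ exists n : nat, a = RtoC (- INR (S n))) ->
     (forall m : nat, (2 - c)%C <> RtoC (INR (S m))) ->
     forall z : C, Cmod z < 1 -> P z).
Proof.
  intros Ec f g h P.
  assert (Fin : forall z r, Cmod z < r -> c <> 0 -> c - 1 <> 0 -> c + 1 <> 0 ->
    (forall k, poch a k = 0 \/ (poch c k <> 0 /\ poch (c + 1) k <> 0 /\ poch (c - 1) k <> 0)) ->
    (b <> 0 \/ 1 - z <> 0) ->
    sumb (coef a b c) r -> sumb (coef a (b+1) (c+1)) r -> sumb (coef a (b-1) (c-1)) r -> P z).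
  { intros z r Hz Hc0 Hc1 Hcm Hg Hor ST SF SG.
    pose proof (core a b c z r Hc0 Hc1 Hcm Hg Ec Hor Hz ST SF SG) as K.
    exists (psum (Dc (coef a (b+1) (c+1))) z), (psum (Dc (coef a (b-1) (c-1))) z).
    split; [|split].
    - apply is_derive_ext with (psum (coef a (b+1) (c+1))).
      { intros t. unfold f. symmetry. apply hypF_psum. }
      apply psum_derive with r; auto.
    - apply is_derive_ext with (psum (coef a (b-1) (c-1))).
      { intros t. unfold g. symmetry. apply hypF_psum. }
      apply psum_derive with r; auto.
    - unfold f, g, h. rewrite !hypF_psum. exact K. }
  split.
  - intros n Ha Hk z.
    assert (Hne : forall (t : R) k, (k <= S (S n))%nat -> t = (INR k - INR (S n))%R -> c <> RtoC t).
    { intros t k Hk' Et E. apply (Hk k Hk'). rewrite E, Et, Ha. ceq. }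
    assert (Hc0 : c <> 0).
    { apply (Hne 0%R (S n)); [lia|ring]. }
    assert (Hc1 : c - 1 <> 0).
    { intro E. apply (Hne 1%R (S (S n))); [lia|rewrite (S_INR (S n)); ring|].
      replace c with (c - 1 + 1) by ring. rewrite E. ceq. }
    assert (Hcm : c + 1 <> 0).
    { intro E. apply (Hne (- (1))%R n); [lia|rewrite S_INR; ring|].
      apply solve_c. match type of E with ?L = _ => transitivity L; [ceq|exact E] end. }
    assert (Hg : forall k, poch a k = 0 \/ (poch c k <> 0 /\ poch (c + 1) k <> 0 /\ poch (c - 1) k <> 0)).
    { intros m. destruct (le_lt_dec (S (S n)) m) as [Hm|Hm].
      - left. apply poch_zero with (S n); [lia|]. rewrite Ha. ceq.
      - right. split; [|split]; apply poch_nz; intros j Hj E.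
        + apply (Hne (- INR j)%R (S n - j)%nat); [lia|rewrite minus_INR by lia; ring|].
          apply solve_c. exact E.
        + apply (Hne (- (INR j + 1))%R (n - j)%nat); [lia|rewrite minus_INR by lia; rewrite S_INR; ring|].
          apply solve_c. match type of E with ?L = _ => transitivity L; [ceq|exact E] end.
        + apply (Hne (- (INR j - 1))%R (S (S n) - j)%nat); [lia|rewrite minus_INR by lia; rewrite !S_INR; ring|].
          apply solve_c. match type of E with ?L = _ => transitivity L; [ceq|exact E] end. }
    assert (Hb : b <> 0).
    { intro Eb. apply (Hne (1 - INR (S n))%R 1%nat); [lia|simpl; ring|].
      rewrite Ec, Eb, Ha. ceq. }
    set (r := (Cmod z + 1)%R).
    assert (Hr : (0 <= r)%R) by (unfold r; pose proof (Cmod_ge_0 z); lra).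
    apply (Fin z r); auto.
    + unfold r; lra.
    + apply (sumb_finite (coef a b c) (S (S n)) r); auto. intros k Hk'. apply (coef_zero_tail _ _ _ n); auto.
    + apply (sumb_finite (coef a (b+1) (c+1)) (S (S n)) r); auto. intros k Hk'. apply (coef_zero_tail _ _ _ n); auto.
    + apply (sumb_finite (coef a (b-1) (c-1)) (S (S n)) r); auto. intros k Hk'. apply (coef_zero_tail _ _ _ n); auto.
  - intros _ Hm z Hz.
    assert (Hne : forall (t : R) m, t = (1 - INR m)%R -> c <> RtoC t).
    { intros t m Et E. apply (Hm m). rewrite E, Et, S_INR. ceq. }
    assert (Hc0 : c <> 0) by (apply (Hne 0%R 1%nat); simpl; ring).
    assert (Hc1 : c - 1 <> 0).
    { intro E. apply (Hne 1%R 0%nat); [simpl; ring|].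
      replace c with (c - 1 + 1) by ring. rewrite E. ceq. }
    assert (Hcm : c + 1 <> 0).
    { intro E. apply (Hne (- (1))%R 2%nat); [simpl; ring|].
      apply solve_c. match type of E with ?L = _ => transitivity L; [ceq|exact E] end. }
    assert (P1 : forall k, poch c k <> 0).
    { intros k. apply poch_nz. intros j Hj E. apply (Hne (- INR j)%R (S j)); [rewrite S_INR; ring|].
      apply solve_c. exact E. }
    assert (P2 : forall k, poch (c + 1) k <> 0).
    { intros k. apply poch_nz. intros j Hj E. apply (Hne (- (INR j + 1))%R (S (S j))); [rewrite !S_INR; ring|].
      apply solve_c. match type of E with ?L = _ => transitivity L; [ceq|exact E] end. }
    assert (P3 : forall k, poch (c - 1) k <> 0).
    { intros k. apply poch_nz. intros j Hj E. apply (Hne (- (INR j - 1))%R j); [ring|].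
      apply solve_c. match type of E with ?L = _ => transitivity L; [ceq|exact E] end. }
    set (r := ((Cmod z + 1) / 2)%R).
    assert (Hr : (0 <= r < 1)%R) by (unfold r; pose proof (Cmod_ge_0 z); lra).
    apply (Fin z r); auto.
    + unfold r; lra.
    + right. intro E. assert (z = 1) by (transitivity (1 - (1 - z)); [ring|rewrite E; ring]).
      subst z. rewrite Cmod_1 in Hz. lra.
    + apply sumb_hyp; auto.
    + apply sumb_hyp; auto.
    + apply sumb_hyp; auto.
Qed.


Close Scope C_scope.

Theorem lemma5 (a b c : C) :
  c = (a - b + 1)%C ->
  let f := fun z => hypF a (b + 1) (c + 1) z in
  let g := fun z => hypF a (b - 1) (c - 1) z in
  let h := fun z => hypF a b c z in
  let P := fun z : C =>
    exists f' g' : C, is_derive f z f' /\ is_derive g z g' /\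
      (z * (f z * g' - f' * g z) = c * (f z * g z - h z * h z))%C in
  (* a negative integer: a = -(n+1) *)
  (forall n : nat, a = RtoC (- INR (S n)) ->
     (forall k : nat, (k <= S (S n))%nat -> c <> (a + RtoC (INR k))%C) ->
     forall z : C, P z) /\
  (* a not a negative integer *)
  ((~ exists n : nat, a = RtoC (- INR (S n))) ->
     (forall m : nat, (2 - c)%C <> RtoC (INR (S m))) ->
     forall z : C, Cmod z < 1 -> P z).
Proof. exact (lemma5_aux a b c). Qed.
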